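(* $\mathrm{1QFA}\nsubseteq\mathrm{1RFA}/n$, and thus $\mathrm{1RFA}/n\neq\mathrm{1QFA}/n$.
   Context: $\mathrm{1QFA}$ is the family of languages recognized with bounded error (error probability at most a constant below $1/2$) by one-way measure-many quantum finite automata (1qfa's). A 1rfa is a one-way deterministic finite automaton satisfying the reversibility condition (each state has at most one predecessor per tape symbol). For equal-length strings $x,y$, $\genfrac{[}{]}{0pt}{}{x}{y}$ is the two-track string with $x$ on the upper track and $y$ on the lower track. $\mathrm{1RFA}/n$ (resp. $\mathrm{1QFA}/n$) is the family of languages $L$ for which there exist a 1rfa (resp. bounded-error 1qfa) $M$, an advice alphabet $\Gamma$ and an advice function $h$ with $|h(n)|=n$ such that $M$ on $\genfrac{[}{]}{0pt}{}{x}{h(|x|)}$ outputs $L(x)$ (with probability at least $1-\varepsilon$, $\varepsilon\in[0,1/2)$, in the 1qfa case). (The witness language is $\{0^m1^n\mid m,n\in\mathbb{N}\}$.) *)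

(* Defs.v *)
From HB Require Import structures.
From mathcomp Require Import all_boot all_algebra.
From mathcomp Require Import complex Rstruct.
Unset Printing Implicit Defensive.
Import GRing.Theory Num.Theory.
Local Open Scope ring_scope.

Definition C : numClosedFieldType := Rdefinitions.R[i].

Inductive tsym (S : Type) := LEnd | REnd | Sym of S.
Arguments LEnd {S}. Arguments REnd {S}.

Definition tape {S : Type} (w : seq S) : seq (tsym S) :=
  LEnd :: map (@Sym S) w ++ [:: REnd].

(* two-track string [x ; y] (x upper track, y lower track), |x| = |y| *)
Definition track2 {S G : Type} (x : seq S) (y : seq G) : seq (S * G) := zip x y.

Record rfa (S : Type) := RFA {
  r_n : nat;
  r_delta : 'I_r_n -> tsym S -> 'I_r_n;
  r_q0 : 'I_r_n;
  r_acc : pred 'I_r_n;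
  r_rej : pred 'I_r_n }.
Arguments r_n {S} _. Arguments r_delta {S} _ _ _. Arguments r_q0 {S} _.
Arguments r_acc {S} _ _. Arguments r_rej {S} _ _.

Definition r_halt {S : Type} (M : rfa S) (q : 'I_(r_n M)) := r_acc M q || r_rej M q.

Definition rfa_wf {S : Type} (M : rfa S) : Prop :=
  (forall q, ~~ (r_acc M q && r_rej M q)) /\
  ~~ r_halt M (r_q0 M) /\
  (forall (a : tsym S) (p1 p2 : 'I_(r_n M)),
      ~~ r_halt M p1 -> ~~ r_halt M p2 ->
      r_delta M p1 a = r_delta M p2 a -> p1 = p2).

(* run from state q on the remaining tape w; halts as soon as a halting
   state is entered. Some true = accept, Some false = reject,
   None = no halting state entered. *)
Fixpoint rfa_run {S : Type} (M : rfa S) (q : 'I_(r_n M)) (w : seq (tsym S)) : option bool :=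
  match w with
  | [::] => None
  | a :: w' =>
      let q' := r_delta M q a in
      if r_acc M q' then Some true
      else if r_rej M q' then Some false
      else rfa_run M q' w'
  end.

Definition rfa_accepts {S : Type} (M : rfa S) (w : seq S) : bool :=
  rfa_run M (r_q0 M) (tape w) == Some true.

Definition adjmx {n : nat} (A : 'M[C]_n) : 'M[C]_n := (map_mx Num.conj A)^T.
Definition unitarymx {n : nat} (A : 'M[C]_n) : Prop := A *m adjmx A = 1%:M.

Record qfa (S : Type) := QFA {
  q_n : nat;
  q_U : tsym S -> 'M[C]_q_n;              (* U_sigma acts on column vectors *)
  q_q0 : 'I_q_n;
  q_acc : pred 'I_q_n;
  q_rej : pred 'I_q_n }.
Arguments q_n {S} _. Arguments q_U {S} _ _. Arguments q_q0 {S} _.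
Arguments q_acc {S} _ _. Arguments q_rej {S} _ _.

Definition q_non {S : Type} (M : qfa S) (q : 'I_(q_n M)) := ~~ q_acc M q && ~~ q_rej M q.

Definition qfa_wf {S : Type} (M : qfa S) : Prop :=
  (forall q, ~~ (q_acc M q && q_rej M q)) /\
  q_non M (q_q0 M) /\
  (forall a, unitarymx (q_U M a)).

(* measure-many semantics: from the (unnormalized) state psi, read w; after
   each symbol apply U_sigma, measure w.r.t. E_acc/E_rej/E_non, and continue
   with the projection onto E_non. *)
Fixpoint qfa_mm {S : Type} (M : qfa S) (psi : 'cV[C]_(q_n M)) (w : seq (tsym S)) : C * C :=
  match w with
  | [::] => (0, 0)
  | a :: w' =>
      let phi := q_U M a *m psi in
      let pa := \sum_(q | q_acc M q) `|phi q 0| ^+ 2 in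
      let pr := \sum_(q | q_rej M q) `|phi q 0| ^+ 2 in
      let psi' := \col_q (if q_non M q then phi q 0 else 0) in
      let r := qfa_mm M psi' w' in
      (pa + r.1, pr + r.2)
  end.

Definition qfa_init {S : Type} (M : qfa S) : 'cV[C]_(q_n M) := \col_q (q == q_q0 M)%:R.

Definition qfa_pacc {S : Type} (M : qfa S) (w : seq S) : C := (qfa_mm M (qfa_init M) (tape w)).1.
Definition qfa_prej {S : Type} (M : qfa S) (w : seq S) : C := (qfa_mm M (qfa_init M) (tape w)).2.

Definition qfa_correct {S : Type} (M : qfa S) (eps : C) (b : bool) (w : seq S) : Prop :=
  if b then 1 - eps <= qfa_pacc M w else 1 - eps <= qfa_prej M w.

Definition in_1QFA {S : finType} (L : pred (seq S)) : Prop :=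
  exists (M : qfa S) (eps : C), qfa_wf M /\ 0 <= eps < 1/2 /\
    forall x : seq S, qfa_correct M eps (L x) x.

Definition advice (G : Type) := nat -> seq G.
Definition advice_ok {G : Type} (h : advice G) := forall n, size (h n) = n.

Definition in_1RFA_n {S : finType} (L : pred (seq S)) : Prop :=
  exists (G : finType) (h : advice G) (M : rfa (S * G)),
    advice_ok h /\ rfa_wf M /\
    forall x : seq S, rfa_accepts M (track2 x (h (size x))) = L x.

Definition in_1QFA_n {S : finType} (L : pred (seq S)) : Prop :=
  exists (G : finType) (h : advice G) (M : qfa (S * G)) (eps : C),
    advice_ok h /\ qfa_wf M /\ 0 <= eps < 1/2 /\
    forall x : seq S, qfa_correct M eps (L x) (track2 x (h (size x))).

(* Main.v *)
Require Import Defs.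
From mathcomp Require Import all_boot all_algebra.
From mathcomp Require Import complex Rstruct ring lra zify.
Import GRing.Theory Num.Theory.
Local Open Scope ring_scope.

Definition mk5 (f : nat -> nat -> C) : 'M[C]_5 := \matrix_(i < 5, j < 5) f i j.
Definition vec5 (f : nat -> C) : 'cV[C]_5 := \col_(i < 5) f i.

Definition fC (i j : nat) : C :=
  match i, j with
  | 1, 0 => 3/5 | 2, 0 => 4/5 | 1, 1 => 4/5 | 2, 1 => -(3/5)
  | 0, 2 => 1 | 3, 3 => 1 | 4, 4 => 1 | _, _ => 0 end.
Definition fA (i j : nat) : C :=
  match i, j with
  | 0, 0 => 1 | 1, 1 => 9/25 | 2, 1 => 12/25 | 4, 1 => 4/5
  | 1, 2 => 12/25 | 2, 2 => 16/25 | 4, 2 => -(3/5) | 3, 3 => 1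
  | 1, 4 => -(4/5) | 2, 4 => 3/5 | _, _ => 0 end.
Definition fB (i j : nat) : C :=
  match i, j with
  | 0, 0 => 1 | 4, 1 => 1 | 2, 2 => 1 | 3, 3 => 1 | 1, 4 => 1 | _, _ => 0 end.
Definition fD (i j : nat) : C :=
  match i, j with
  | 0, 0 => 1 | 4, 1 => 1 | 3, 2 => 1 | 2, 3 => 1 | 1, 4 => 1 | _, _ => 0 end.

Lemma sum5 (F : nat -> C) : \sum_(q < 5) F (val q) = F 0%N + F 1%N + F 2%N + F 3%N + F 4%N.
Proof. by rewrite !big_ord_recr big_ord0 /= add0r. Qed.

Lemma conj_frac (n m : nat) : ((n%:R / m%:R : C)^* = n%:R / m%:R)%R.
Proof. by rewrite fmorph_div !rmorph_nat. Qed.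

Ltac conjtac := rewrite ?(rmorph0, rmorph1, rmorphN, rmorphD, fmorph_div, fmorphV, rmorph_nat, rmorphM).

Lemma unit5 f : (forall i j, (f i j)^* = f i j) ->
  (forall i k, (i < 5)%N -> (k < 5)%N ->
     f i 0%N * f k 0%N + f i 1%N * f k 1%N + f i 2%N * f k 2%N + f i 3%N * f k 3%N + f i 4%N * f k 4%N
     = (i == k)%:R) ->
  Defs.unitarymx (mk5 f).
Proof.
move=> Hc Hs; rewrite /Defs.unitarymx /adjmx; apply/matrixP => i k.
rewrite !mxE; under eq_bigr do rewrite !mxE.
rewrite (sum5 (fun j => f i j * (f k j)^* )) !Hc Hs //.
Qed.
Ltac enum5 i := case: i => [|[|[|[|[|i]]]]] //=.

Lemma uC : Defs.unitarymx (mk5 fC).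
Proof.
apply: unit5.
  move=> i j; enum5 i; enum5 j; conjtac => //.
move=> i k; enum5 i; enum5 k; move=> _ _; field=> //.
Qed.
Lemma uA : Defs.unitarymx (mk5 fA).
Proof.
apply: unit5.
  move=> i j; enum5 i; enum5 j; conjtac => //.
move=> i k; enum5 i; enum5 k; move=> _ _; field=> //.
Qed.
Lemma uB : Defs.unitarymx (mk5 fB).
Proof.
apply: unit5.
  move=> i j; enum5 i; enum5 j; conjtac => //.
move=> i k; enum5 i; enum5 k; move=> _ _; field=> //.
Qed.
Lemma uD : Defs.unitarymx (mk5 fD).
Proof.
apply: unit5.
  move=> i j; enum5 i; enum5 j; conjtac => //.
move=> i k; enum5 i; enum5 k; move=> _ _; field=> //.
Qed.

Definition fm {T : Type} (cls : T -> bool) (a : tsym T) :=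
  match a with LEnd => fC | REnd => fD | Sym t => if cls t then fB else fA end.

Definition qfaT {T : Type} (cls : T -> bool) : qfa T :=
  @QFA T 5 (fun a => mk5 (fm cls a)) ord0 (fun q => val q == 3%N) (fun q => val q == 4%N).

Definition app (f : nat -> nat -> C) (v : nat -> C) (i : nat) : C :=
  f i 0%N * v 0%N + f i 1%N * v 1%N + f i 2%N * v 2%N + f i 3%N * v 3%N + f i 4%N * v 4%N.

Lemma mulE f v (q : 'I_5) : (mk5 f *m vec5 v) q 0 = app f v q.
Proof. rewrite !mxE; under eq_bigr do rewrite !mxE; exact: (sum5 (fun j => f q j * v j)). Qed.

Lemma step {T : Type} (cls : T -> bool) (v : nat -> C) a w :
  qfa_mm (qfaT cls) (vec5 v) (a :: w) =
  (`|app (fm cls a) v 3%N| ^+ 2 + (qfa_mm (qfaT cls)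
      (vec5 (fun i => if (i != 3%N) && (i != 4%N) then app (fm cls a) v i else 0)) w).1,
   `|app (fm cls a) v 4%N| ^+ 2 + (qfa_mm (qfaT cls)
      (vec5 (fun i => if (i != 3%N) && (i != 4%N) then app (fm cls a) v i else 0)) w).2).
Proof.
rewrite /=.
have -> : vec5 (fun i => if (i != 3%N) && (i != 4%N) then app (fm cls a) v i else 0) =
   \col_q (if q_non (qfaT cls) q then (mk5 (fm cls a) *m vec5 v) q 0 else 0).
  by apply/matrixP => i j; rewrite [LHS]mxE [RHS]mxE mulE.
congr pair; congr (_ + _).
  rewrite big_mkcond.
 under eq_bigr do rewrite mulE.
  rewrite (sum5 (fun i => if i == 3%N then `|app (fm cls a) v i| ^+ 2 else 0)) /=.
  by rewrite !add0r addr0.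
rewrite big_mkcond; under eq_bigr do rewrite mulE.
rewrite (sum5 (fun i => if i == 4%N then `|app (fm cls a) v i| ^+ 2 else 0)) /=.
by rewrite !add0r.
Qed.

Lemma vec5_ext f g : (forall i, (i < 5)%N -> f i = g i) -> vec5 f = vec5 g.
Proof. by move=> H; apply/matrixP => i j; rewrite !mxE H. Qed.

Definition e0 (i : nat) : C := (i == 0%N)%:R.
Definition psi (i : nat) : C := match i with 1 => 3/5 | 2 => 4/5 | _ => 0 end.
Definition psi2 (i : nat) : C := match i with 2 => 4/5 | _ => 0 end.

Ltac vtac := let i := fresh "i" in apply: vec5_ext => i; enum5 i; move=> _; rewrite /app /e0 /psi /psi2 /=; field=> //.
Ltac ntac := rewrite normCK /app /e0 /psi /psi2 /=; conjtac; field=> //.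

Lemma init_e0 {T} (cls : T -> bool) : qfa_init (qfaT cls) = vec5 e0.
Proof. by apply/matrixP => i j; rewrite !mxE. Qed.

Lemma S0 {T} (cls : T -> bool) w : qfa_mm (qfaT cls) (vec5 e0) (LEnd :: w) = qfa_mm (qfaT cls) (vec5 psi) w.
Proof.
rewrite step.
have -> : vec5 (fun i => if (i != 3%N) && (i != 4%N) then app (fm cls LEnd) e0 i else 0) = vec5 psi.
  by vtac.
have -> : `|app (fm cls LEnd) e0 3| ^+ 2 = 0 by ntac.
have -> : `|app (fm cls LEnd) e0 4| ^+ 2 = 0 by ntac.
by rewrite !add0r; case: (qfa_mm _ _ _).
Qed.


Fixpoint L01 (x : seq bool) : bool :=
  match x with [::] => true | false :: x' => L01 x' | true :: x' => all id x' end.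

Section S.
Variables (T : Type) (cls : T -> bool).
Local Notation M := (qfaT cls).

Lemma S1 t w : cls t = false -> qfa_mm M (vec5 psi) (Sym T t :: w) = qfa_mm M (vec5 psi) w.
Proof.
move=> Ht; rewrite step /= Ht.
have -> : vec5 (fun i => if (i != 3%N) && (i != 4%N) then app fA psi i else 0) = vec5 psi.
  by vtac.
have -> : `|app fA psi 3| ^+ 2 = 0 by ntac.
have -> : `|app fA psi 4| ^+ 2 = 0 by ntac.
by rewrite !add0r; case: (qfa_mm _ _ _).
Qed.

Lemma S2 t w : cls t = true -> qfa_mm M (vec5 psi) (Sym T t :: w) =
   ((qfa_mm M (vec5 psi2) w).1, 9/25 + (qfa_mm M (vec5 psi2) w).2).
Proof.
move=> Ht; rewrite step /= Ht.
have -> : vec5 (fun i => if (i != 3%N) && (i != 4%N) then app fB psi i else 0) = vec5 psi2.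
  by vtac.
have -> : `|app fB psi 3| ^+ 2 = 0 by ntac.
have -> : `|app fB psi 4| ^+ 2 = 9/25 by ntac.
by rewrite !add0r.
Qed.

Lemma S3 : qfa_mm M (vec5 psi) [:: REnd] = (16/25, 9/25).
Proof.
rewrite step /=.
have -> : `|app fD psi 3| ^+ 2 = 16/25 by ntac.
have -> : `|app fD psi 4| ^+ 2 = 9/25 by ntac.
by rewrite !addr0.
Qed.

Lemma S4 t w : cls t = true -> qfa_mm M (vec5 psi2) (Sym T t :: w) = qfa_mm M (vec5 psi2) w.
Proof.
move=> Ht; rewrite step /= Ht.
have -> : vec5 (fun i => if (i != 3%N) && (i != 4%N) then app fB psi2 i else 0) = vec5 psi2.
  by vtac.
have -> : `|app fB psi2 3| ^+ 2 = 0 by ntac.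
have -> : `|app fB psi2 4| ^+ 2 = 0 by ntac.
by rewrite !add0r; case: (qfa_mm _ _ _).
Qed.

Lemma S5 : qfa_mm M (vec5 psi2) [:: REnd] = (16/25, 0).
Proof.
rewrite step /=.
have -> : `|app fD psi2 3| ^+ 2 = 16/25 by ntac.
have -> : `|app fD psi2 4| ^+ 2 = 0 by ntac.
by rewrite !addr0.
Qed.

Lemma mm_ge0 (v : 'cV[C]_5) w : 0 <= (qfa_mm M v w).2.
Proof.
elim: w v => [|a w IH] v /=; first by [].
apply: addr_ge0; last exact: IH.
apply: sumr_ge0 => q _; apply: exprn_ge0; exact: normr_ge0.
Qed.

Lemma S6 t w : cls t = false -> 144/625 <= (qfa_mm M (vec5 psi2) (Sym T t :: w)).2.
Proof.
move=> Ht; rewrite step /= Ht.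
have -> : `|app fA psi2 4| ^+ 2 = 144/625 by ntac.
by rewrite lerDl mm_ge0.
Qed.


Lemma P2 x : (all id (map cls x) -> (qfa_mm M (vec5 psi2) (map (Sym T) x ++ [:: REnd])).1 = 16/25) /\
   (~~ all id (map cls x) -> 144/625 <= (qfa_mm M (vec5 psi2) (map (Sym T) x ++ [:: REnd])).2).
Proof.
elim: x => [|t x [IH1 IH2]]; first by rewrite [map _ _ ++ _]/= S5.
rewrite !map_cons cat_cons; case Ht: (cls t); rewrite [all _ _]/=.
  by rewrite S4.
by split=> // _; apply: S6.
Qed.

Lemma P1 x : (L01 (map cls x) -> (qfa_mm M (vec5 psi) (map (Sym T) x ++ [:: REnd])).1 = 16/25) /\
   (~~ L01 (map cls x) -> 369/625 <= (qfa_mm M (vec5 psi) (map (Sym T) x ++ [:: REnd])).2).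
Proof.
elim: x => [|t x [IH1 IH2]]; first by rewrite [map _ _ ++ _]/= S3.
rewrite !map_cons cat_cons; case Ht: (cls t); rewrite [L01 _]/=.
  rewrite S2 //=; have [H1 H2] := P2 x; split=> // /H2 H.
  have -> : (369/625 : C) = 9/25 + 144/625 by field.
  by rewrite lerD2l.
by rewrite S1.
Qed.

Lemma qfaT_correct x : qfa_correct M (256/625) (L01 (map cls x)) x.
Proof.
rewrite /qfa_correct /qfa_pacc /qfa_prej init_e0 /tape S0.
have -> : (1 - 256/625 : C) = 369/625 by field.
have [H1 H2] := P1 x.
case: ifP => HL.
  rewrite H1 // -subr_ge0.
  have -> : (16/25 - 369/625 : C) = 31/625 by field.
  by rewrite divr_ge0 ?ler0n.
by apply: H2; rewrite HL.
Qed.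

Lemma qfaT_wf : qfa_wf M.
Proof.
split; first by move=> q /=; case: eqP => // ->.
split; first by [].
by case=> [||t] /=; [exact: uC | exact: uD | case: (cls t); [exact: uB | exact: uA]].
Qed.
End S.

Lemma eps_ok : 0 <= (256/625 : C) < 1/2.
Proof.
apply/andP; split; first by rewrite divr_ge0 ?ler0n.
rewrite -subr_gt0.
have -> : (1/2 - 256/625 : C) = 113/1250 by field.
by rewrite divr_gt0 ?ltr0n.
Qed.

Local Close Scope ring_scope.
Lemma zip_catl {A B : Type} (x y : seq A) (g : seq B) :
  size x <= size g -> zip (x ++ y) g = zip x g ++ zip y (drop (size x) g).
Proof.
elim: x g => [|a x IH] [|b g] //=; rewrite ?drop0 //.
by move=> H; rewrite IH.
Qed.

Lemma L01_nseqF j y : L01 (nseq j false ++ y) = L01 y.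
Proof. by elim: j. Qed.
Lemma L01_T k y : L01 (nseq k true ++ true :: y) = all id y.
Proof. by case: k => //= k; rewrite all_cat all_nseq /= orbT. Qed.
Lemma L01_in j k : L01 (nseq j false ++ nseq k true) = true.
Proof. by rewrite L01_nseqF; case: k => //= k; rewrite all_nseq orbT. Qed.

Lemma L01_allT k : L01 (nseq k true) = true.
Proof. exact: (L01_in 0 k). Qed.

Section R.
Variables (G : finType) (M : rfa (bool * G)).

Lemma run_cat q s t : rfa_run M q (s ++ t) =
  if rfa_run M q s is Some b then Some b else rfa_run M (foldl (r_delta M) q s) t.
Proof.
elim: s q => [|a s IH] q //=.
case: ifP => _ //; case: ifP => _ //; exact: IH.
Qed.

Lemma nohalt q s : ~~ r_halt M q -> rfa_run M q s = None -> ~~ r_halt M (foldl (r_delta M) q s).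
Proof.
elim: s q => [|a s IH] q //= Hq.
case: ifP => Ha //; case: ifP => Hr // Hrun.
by apply: IH Hrun; rewrite /r_halt Ha Hr.
Qed.

Variables (g : seq G) (N : nat).
Hypothesis Hn : N = r_n M.
Hypothesis Hg : size g = N.+2.
Hypothesis Hwf : rfa_wf M.
Hypothesis Hacc : forall x, size x = N.+2 -> rfa_accepts M (track2 x g) = L01 x.

Definition P (u : seq bool) : seq (tsym (bool * G)) := LEnd :: map (Sym _) (zip u g).
Definition Rt (i : nat) (y : seq bool) : seq (tsym (bool * G)) :=
  map (Sym _) (zip y (drop i g)) ++ [:: REnd].
Definition st u := foldl (r_delta M) (r_q0 M) (P u).

Lemma tapeE u y : size u <= N.+2 -> tape (track2 (u ++ y) g) = P u ++ Rt (size u) y.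
Proof. by move=> H; rewrite /tape /track2 zip_catl ?Hg // map_cat -catA. Qed.

Lemma PE u y : size u <= N.+2 -> P (u ++ y) = P u ++ map (Sym _) (zip y (drop (size u) g)).
Proof. by move=> H; rewrite /P zip_catl ?Hg // map_cat. Qed.

Lemma none u y1 y2 : size u <= N.+2 -> size (u ++ y1) = N.+2 -> size (u ++ y2) = N.+2 ->
  L01 (u ++ y1) -> ~~ L01 (u ++ y2) -> rfa_run M (r_q0 M) (P u) = None.
Proof.
move=> Hu H1 H2 L1 L2.
have A1 := Hacc _ H1; have A2 := Hacc _ H2.
rewrite /rfa_accepts !tapeE // !run_cat in A1 A2.
case E: (rfa_run M (r_q0 M) (P u)) => [b|] //; rewrite E in A1 A2.
by rewrite A1 in A2; move: L2; rewrite -A2 L1.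
Qed.

Lemma same u1 u2 y : size u1 = size u2 -> size u1 <= N.+2 -> size (u1 ++ y) = N.+2 ->
  rfa_run M (r_q0 M) (P u1) = None -> rfa_run M (r_q0 M) (P u2) = None ->
  st u1 = st u2 -> L01 (u1 ++ y) = L01 (u2 ++ y).
Proof.
move=> Hs Hu H N1 N2 E.
have H' : size (u2 ++ y) = N.+2 by rewrite size_cat -Hs -size_cat.
rewrite -(Hacc _ H) -(Hacc _ H') /rfa_accepts !tapeE -?Hs // !run_cat N1 N2.
by rewrite /st in E; rewrite E.
Qed.

Lemma stS i : i < N.+2 -> exists a, forall v, size v = i -> st (v ++ [:: true]) = r_delta M (st v) a.
Proof.
move=> Hi; case Ed: (drop i g) => [|c rest].
  by move: (size_drop i g); rewrite Ed Hg /=; lia.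
exists (Sym _ (true, c)) => v Hv.
have Z : zip [:: true] (c :: rest) = [:: (true, c)] by case: rest {Ed}.
rewrite /st PE ?Hv ?Ed ?Z ?foldl_cat //=; exact: ltnW.
Qed.

Definition u (i j : nat) := nseq j false ++ nseq (i - j) true.

Lemma size_u i j : j <= i -> size (u i j) = i.
Proof. rewrite /u size_cat !size_nseq; lia. Qed.

Lemma none_u i j : i <= N -> j <= i -> rfa_run M (r_q0 M) (P (u i j)) = None.
Proof.
move=> Hi Hj.
apply: (@none _ (nseq (N.+2 - i) true) (true :: false :: nseq (N - i) true)).
- by rewrite size_u //; lia.
- rewrite size_cat size_u // size_nseq; lia.
- rewrite size_cat size_u //= size_nseq; lia.
- by rewrite /u -catA -nseqD L01_in.
- by rewrite /u -catA L01_nseqF L01_T.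
Qed.

Lemma inj_u i : i <= N -> forall j j', j <= i -> j' <= i -> st (u i j) = st (u i j') -> j = j'.
Proof.
elim: i => [|i IH] Hi j j' Hj Hj'; first by lia.
have uS k : k <= i -> u i.+1 k = u i k ++ [:: true].
  by move=> Hk; rewrite /u subSn // -addn1 nseqD catA.
have key k : k <= i -> st (u i.+1 i.+1) <> st (u i.+1 k).
  move=> Hk E.
  have Hs : size (u i.+1 i.+1 ++ false :: nseq (N - i) true) = N.+2.
    by rewrite size_cat size_u //= size_nseq; lia.
  have Hsz : size (u i.+1 i.+1) = size (u i.+1 k) by rewrite !size_u //; lia.
  have Hsz2 : size (u i.+1 i.+1) <= N.+2 by rewrite size_u //; lia.
  have := @same _ _ _ Hsz Hsz2 Hs (@none_u _ _ Hi (leqnn _)) (@none_u _ _ Hi (leqW Hk)) E.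
  rewrite /u subnn -!catA !L01_nseqF subSn //= L01_allT all_cat all_nseq /=.
  by rewrite andbF.
have [Hji|Hji] := leqP j i; have [Hj'i|Hj'i] := leqP j' i.
- rewrite !uS //.
  have [a Ha] := @stS i ltac:(lia).
  rewrite !Ha ?size_u // => E.
  apply: (IH (ltnW Hi)) => //.
  case: Hwf => _ [H0 Hrev].
  apply: Hrev E; apply: nohalt => //; apply: none_u => //; lia.
- have -> : j' = i.+1 by lia.
  by move=> E; exfalso; apply: (key j Hji); rewrite E.
- have -> : j = i.+1 by lia.
  by move=> E; exfalso; apply: (key j' Hj'i).
- lia.
Qed.

Lemma contra : False.
Proof.
pose f := fun j : 'I_N.+1 => st (u N j).
have inj : injective f.
  move=> a b /inj_u H; apply: ord_inj; apply: H => //; rewrite -ltnS; exact: ltn_ord.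
by have := leq_card f inj; rewrite !card_ord -Hn ltnn.
Qed.
End R.

Local Open Scope ring_scope.
Lemma not_RFA : ~ in_1RFA_n (L01 : pred (seq bool)).
Proof.
move=> [G [h [M [Hok [Hwf H]]]]].
apply: (@contra G M (h (r_n M).+2) (r_n M) erefl (Hok _) Hwf).
by move=> x Hx; rewrite -H Hx.
Qed.

Lemma yes_QFA : in_1QFA (L01 : pred (seq bool)).
Proof.
exists (qfaT (T:=bool) id), (256/625); split; first exact: qfaT_wf.
split; first exact: eps_ok.
by move=> x; have := qfaT_correct bool id x; rewrite map_id.
Qed.

Lemma yes_QFA_n : in_1QFA_n (L01 : pred (seq bool)).
Proof.
exists unit, (fun n => nseq n tt), (qfaT (fun p : bool * unit => p.1)), (256/625).
split; first by move=> n; rewrite size_nseq.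
split; first exact: qfaT_wf.
split; first exact: eps_ok.
move=> x; have := qfaT_correct (bool * unit) (fun p : bool * unit => p.1) (track2 x (nseq (size x) tt)).
by rewrite /track2 -/(unzip1 _) unzip1_zip // size_nseq.
Qed.

Theorem corollary4p2 :
  (exists (S : finType) (L : pred (seq S)), in_1QFA L /\ ~ in_1RFA_n L) /\
  ~ (forall (S : finType) (L : pred (seq S)), in_1RFA_n L <-> in_1QFA_n L).
Proof.
split.
  by exists bool, (L01 : pred (seq bool)); split; [exact: yes_QFA | exact: not_RFA].
move=> Hall; apply: not_RFA; apply/(Hall bool); exact: yes_QFA_n.
Qed.
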